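(* Suppose $(X,\tau)$ is a Choquet space, $B\subseteq\mathcal{P}(X)$ is a base for $\tau$ closed under finite intersections, and $B_{0}\subseteq B$. Then there exists $B_{1}$ with $B_{0}\subseteq B_{1}\subseteq B$, $|B_{1}|\leq|B_{0}|+\aleph_{0}$, such that $(X,\tau_{B_{1}})$ is Choquet, where $\tau_{B_{1}}$ is the topology generated by $B_{1}$.
   Context: The Choquet game on a space $X$: in round $n$ player A chooses a non-empty open $U_{n}\subseteq V_{n-1}$ (with $V_{-1}=X$) and player B chooses a non-empty open $V_{n}\subseteq U_{n}$; B wins if $\bigcap_{n}V_{n}\neq\emptyset$. $X$ is a Choquet space if B has a winning strategy. *)

(* Defs.v *)
From mathcomp Require Import all_boot.
From mathcomp Require Import boolp classical_sets cardinality.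
Set Implicit Arguments. Unset Strict Implicit. Unset Printing Implicit Defensive.
Local Open Scope classical_set_scope.

Definition is_topology {X : Type} (T : set (set X)) : Prop :=
  [/\ T setT,
      (forall U V, T U -> T V -> T (U `&` V)) &
      (forall F : set (set X), F `<=` T -> T (\bigcup_(A in F) A))].

Definition is_base {X : Type} (tau B : set (set X)) : Prop :=
  B `<=` tau /\
  (forall U, tau U -> exists F : set (set X), F `<=` B /\ U = \bigcup_(A in F) A).

(* closed under (binary, hence all nonempty finite) intersections *)
Definition closed_under_finite_inter {X : Type} (B : set (set X)) : Prop :=
  forall U V, B U -> B V -> B (U `&` V).

Definition generated_topology {X : Type} (B1 : set (set X)) : set (set X) :=
  [set U | forall T, is_topology T -> B1 `<=` T -> T U].

(* A strategy for player B maps the sequence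
   [:: U_0; ...; U_n] of player A's moves so far to B's answer V_n
   (B's own earlier moves are determined by the strategy). *)
Definition legal_B_strategy {X : Type} (tau : set (set X))
    (sigma : seq (set X) -> set X) : Prop :=
  forall (h : seq (set X)) (U : set X), tau U -> U !=set0 ->
    [/\ tau (sigma (rcons h U)), sigma (rcons h U) !=set0 &
        sigma (rcons h U) `<=` U].

Definition B_answer {X : Type} (sigma : seq (set X) -> set X)
    (U : nat -> set X) (n : nat) : set X :=
  sigma (mkseq U n.+1).

Definition winning_B_strategy {X : Type} (tau : set (set X))
    (sigma : seq (set X) -> set X) : Prop :=
  legal_B_strategy tau sigma /\
  forall U : nat -> set X,
    (forall n, tau (U n) /\ U n !=set0) ->
    (forall n, U n.+1 `<=` B_answer sigma U n) ->
    (\bigcap_n B_answer sigma U n) !=set0.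

Definition choquet {X : Type} (tau : set (set X)) : Prop :=
  exists sigma, winning_B_strategy tau sigma.

(* Main.v *)
Require Import Defs.
From mathcomp Require Import all_boot.
From mathcomp Require Import boolp classical_sets cardinality.
Local Open Scope classical_set_scope.
Set Implicit Arguments. Unset Strict Implicit.

Definition inj_on {T U} (A : set T) (Bs : set U) (f : T -> U) :=
  (forall x, A x -> Bs (f x)) /\ (forall x y, A x -> A y -> f x = f y -> x = y).
Definition myle {T U} (A : set T) (Bs : set U) := exists f, inj_on A Bs f.

Lemma choice2 (T U : Type) (u0 : U) (A : T -> Prop) (R : T -> U -> Prop) :
  (forall x, A x -> exists y, R x y) -> exists f : T -> U, forall x, A x -> R x (f x).
Proof.
move=> H.
have: forall x, exists y, A x -> R x y.
  move=> x; case: (pselect (A x)) => Ax; last by exists u0.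
  by have [y Hy] := H x Ax; exists y.
by case/choice => f Hf; exists f.
Qed.

Lemma myle_total T U (t0 : T) (u0 : U) (A : set T) (Bs : set U) :
  myle A Bs \/ myle Bs A.
Proof.
pose P (G : set (T * U)) := (forall p, G p -> A p.1 /\ Bs p.2) /\
  (forall p q, G p -> G q -> p.1 = q.1 -> p.2 = q.2) /\
  (forall p q, G p -> G q -> p.2 = q.2 -> p.1 = q.1).
have chainP : forall F, F `<=` P -> total_on F subset -> P (\bigcup_(G in F) G).
  move=> F FP Ftot; split; [|split].
  - by move=> p [G FG Gp]; exact: (FP G FG).1 _ Gp.
  - move=> p q [G1 F1 G1p] [G2 F2 G2q].
    case: (Ftot _ _ F1 F2) => S.
    + exact: (FP G2 F2).2.1 _ _ (S _ G1p) G2q.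
    + exact: (FP G1 F1).2.1 _ _ G1p (S _ G2q).
  - move=> p q [G1 F1 G1p] [G2 F2 G2q].
    case: (Ftot _ _ F1 F2) => S.
    + exact: (FP G2 F2).2.2 _ _ (S _ G1p) G2q.
    + exact: (FP G1 F1).2.2 _ _ G1p (S _ G2q).
have [G [PG Gmax]] := Zorn_bigcup chainP.
case: (pselect (forall a, A a -> exists b, G (a, b))) => [HA|HA].
  left; have [f Hf] := choice2 u0 HA; exists f; split.
  - by move=> a Aa; exact: (PG.1 _ (Hf a Aa)).2.
  - move=> a a' Aa Aa' E.
    exact: (PG.2.2 (a, f a) (a', f a') (Hf a Aa) (Hf a' Aa') E).
case: (pselect (forall b, Bs b -> exists a, G (a, b))) => [HB|HB].
  right; have [f Hf] := choice2 t0 HB; exists f; split.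
  - by move=> b Bb; exact: (PG.1 _ (Hf b Bb)).1.
  - move=> b b' Bb Bb' E.
    exact: (PG.2.1 (f b, b) (f b', b') (Hf b Bb) (Hf b' Bb') E).
exfalso.
move/existsNP: HA => [a /not_implyP [Aa /forallNP Hna]].
move/existsNP: HB => [b /not_implyP [Bb /forallNP Hnb]].
apply: (Gmax (G `|` [set (a, b)])).
  split; first by move=> p Gp; left.
  by move=> /(_ (a, b) (or_intror erefl)) /Hna.
split; [|split].
- by move=> p [Gp|->]; [exact: PG.1|].
- move=> p q [Gp|->] [Gq|->] //=.
  + exact: PG.2.1.
  + by move=> E; exfalso; apply: (Hna p.2); rewrite -E -surjective_pairing.
  + by move=> E; exfalso; apply: (Hna q.2); rewrite E -surjective_pairing.
- move=> p q [Gp|->] [Gq|->] //=.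
  + exact: PG.2.2.
  + by move=> E; exfalso; apply: (Hnb p.1); rewrite -E -surjective_pairing.
  + by move=> E; exfalso; apply: (Hnb q.1); rewrite E -surjective_pairing.
Qed.

Section Hess.
Variables (T : Type) (K : set T) (e : nat -> T).
Hypotheses (Ke : forall n, K (e n)) (einj : injective e).

Definition Dom (G : set ((T * T) * T)) : set T := [set x | exists z, G ((x, x), z)].
Definition Pg (G : set ((T * T) * T)) : Prop :=
  [/\ (forall x y z, G ((x, y), z) -> [/\ Dom G x, Dom G y & Dom G z]),
      (forall x y, Dom G x -> Dom G y -> exists z, G ((x, y), z)),
      (forall p z z', G (p, z) -> G (p, z') -> z = z'),
      (forall p q z, G (p, z) -> G (q, z) -> p = q) &
      (forall x, Dom G x -> K x)].

Definition G0 : set ((T * T) * T) :=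
  [set w | exists i j, w = ((e i, e j), e (pickle ((i, j) : nat * nat)))].

Lemma DomG0 x : Dom G0 x <-> exists i, x = e i.
Proof.
split.
- by move=> [z [i [j [-> _ _]]]]; exists i.
- by move=> [i ->]; exists (e (pickle ((i, i) : nat * nat))); exists i, i.
Qed.

Lemma PgG0 : Pg G0.
Proof.
split.
- move=> x y z [i [j [-> -> ->]]]; split; apply/DomG0; eexists; reflexivity.
- move=> x y /DomG0 [i ->] /DomG0 [j ->].
  by exists (e (pickle ((i, j) : nat * nat))); exists i, j.
- move=> p z z' [i [j E1]] [i' [j' E2]]; case: E1 => ? ?; subst.
  by case: E2 => /einj-> /einj-> ->.
- move=> p q z [i [j E1]] [i' [j' E2]]; case: E1 => ? ?; subst.
  by case: E2 => -> /einj/(pcan_inj pickleK) [-> ->].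
- by move=> x /DomG0 [i ->].
Qed.

Lemma Dom_mono (G G' : set ((T * T) * T)) : G `<=` G' -> Dom G `<=` Dom G'.
Proof. by move=> S x [z Gz]; exists z; apply: S. Qed.

Lemma Pg_common (U : set ((T * T) * T)) :
  (forall w1 w2, U w1 -> U w2 -> exists G, [/\ Pg G, G `<=` U, G w1 & G w2]) ->
  Pg U.
Proof.
move=> C; split.
- move=> x y z Uw; have [G [PG S Gw _]] := C _ _ Uw Uw.
  have [Dx Dy Dz] := (let: And5 a _ _ _ _ := PG in a) _ _ _ Gw.
  by split; apply: (Dom_mono S).
- move=> x y [z Uz] [z' Uz'].
  have [G [PG S G1 G2]] := C _ _ Uz Uz'.
  have [z'' Gz] := (let: And5 _ a _ _ _ := PG in a) x y (ex_intro _ z G1) (ex_intro _ z' G2).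
  by exists z''; apply: S.
- move=> p z z' U1 U2; have [G [PG S G1 G2]] := C _ _ U1 U2.
  exact: (let: And5 _ _ a _ _ := PG in a) _ _ _ G1 G2.
- move=> p q z U1 U2; have [G [PG S G1 G2]] := C _ _ U1 U2.
  exact: (let: And5 _ _ _ a _ := PG in a) _ _ _ G1 G2.
- move=> x [z Uz]; have [G [PG S G1 _]] := C _ _ Uz Uz.
  exact: (let: And5 _ _ _ _ a := PG in a) x (ex_intro _ z G1).
Qed.

Lemma Pg_chain (F : set (set ((T * T) * T))) :
  F `<=` (fun H => Pg (G0 `|` H)) -> total_on F subset ->
  Pg (G0 `|` \bigcup_(H in F) H).
Proof.
move=> FP Ftot; apply: Pg_common => w1 w2 U1 U2.
have sub H : F H -> G0 `|` H `<=` G0 `|` \bigcup_(H in F) H.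
  by move=> FH w [?|?]; [left|right; exists H].
case: U1 => [G1|[H1 F1 H1w]]; case: U2 => [G2|[H2 F2 H2w]].
- exists G0; split; [exact: PgG0| by move=> w ?; left|by []|by []].
- by exists (G0 `|` H2); split; [exact: FP|exact: sub|left|right].
- by exists (G0 `|` H1); split; [exact: FP|exact: sub|right|left].
- case: (Ftot _ _ F1 F2) => S.
  + by exists (G0 `|` H2); split; [exact: FP|exact: sub|right; apply: S|right].
  + by exists (G0 `|` H1); split; [exact: FP|exact: sub|right|right; apply: S].
Qed.

Lemma hessenberg : exists pr : T -> T -> T,
  (forall x y, K x -> K y -> K (pr x y)) /\
  (forall x y x' y', K x -> K y -> K x' -> K y' -> pr x y = pr x' y' -> x = x' /\ y = y').
Proof.
have [H [PH Hmax]] := Zorn_bigcup Pg_chain.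
set G := G0 `|` H in PH.
case: PH => Ga Gb Gc Gd Ge.
set D := Dom G.
have DN i : D (e i).
  by apply: (Dom_mono (G := G0)); [move=> w ?; left|apply/DomG0; exists i].
have [f2 Hf2] := @choice2 (T * T) T (e 0) (fun p => D p.1 /\ D p.2)
  (fun p z => G (p, z)) (fun p Hp => ltac:(case: p Hp => a b Hp; exact: (Gb _ _ Hp.1 Hp.2))).
pose f x y := f2 (x, y).
have fG x y : D x -> D y -> G ((x, y), f x y) by move=> Dx Dy; exact: (Hf2 (x, y)).
have fD x y : D x -> D y -> D (f x y).
  by move=> Dx Dy; have [] := Ga _ _ _ (fG x y Dx Dy).
have finj x y x' y' : D x -> D y -> D x' -> D y' -> f x y = f x' y' -> x = x' /\ y = y'.
  move=> Dx Dy Dx' Dy' E.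
  have := Gd _ _ _ (fG x y Dx Dy); rewrite E => /(_ _ (fG x' y' Dx' Dy')).
  by case.
have e01 : e 0 <> e 1 by move/einj.
case: (myle_total (e 0) (e 0) [set x | K x /\ ~ D x] D) => [[h [hD hinj]]|[g [gK ginj]]].
  pose k x := if pselect (D x) then f x (e 0) else f (h x) (e 1).
  have kD x : K x -> D (k x).
    move=> Kx; rewrite /k; case: pselect => Dx; apply: (fD) => //; exact: (hD).
  have kinj x x' : K x -> K x' -> k x = k x' -> x = x'.
    move=> Kx Kx'; rewrite /k; case: pselect => Dx; case: pselect => Dx' E.
    - by have [] := finj _ _ _ _ Dx (DN 0) Dx' (DN 0) E.
    - have hD' : D (h x') := hD x' (conj Kx' Dx').
      by have [_ /e01] := finj _ _ _ _ Dx (DN 0) hD' (DN 1) E.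
    - have hD' : D (h x) := hD x (conj Kx Dx).
      by have [_ /esym/e01] := finj _ _ _ _ hD' (DN 1) Dx' (DN 0) E.
    - have [E1 _] := finj _ _ _ _ (hD x (conj Kx Dx)) (DN 1)
                      (hD x' (conj Kx' Dx')) (DN 1) E.
      exact: hinj (conj Kx Dx) (conj Kx' Dx') E1.
  exists (fun x y => f (k x) (k y)); split.
  - by move=> x y Kx Ky; apply: (Ge); apply: (fD); apply: (kD).
  - move=> x y x' y' Kx Ky Kx' Ky' /finj [] //; try exact: (kD).
    by move=> /kinj E1 /kinj E2; split; [apply: E1|apply: E2].
exfalso.
pose C := [set c | exists a, D a /\ c = g a].
have [gi Hgi] := @choice2 T T (e 0) C (fun c a => D a /\ c = g a) (fun c Cc => Cc).
have CnD c : C c -> ~ D c by move=> [a [Da ->]]; case: (gK a Da).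
have CK c : C c -> K c by move=> [a [Da ->]]; case: (gK a Da).
pose pb x := if pselect (D x) then x else gi x.
have pbD x : D x \/ C x -> D (pb x).
  rewrite /pb; case: pselect => // Dx [//|Cx]; exact: (Hgi x Cx).1.
pose tag x y := if pselect (D x) then (if pselect (D y) then 3 else 0)
                else (if pselect (D y) then 1 else 2).
pose val x y := g (f (f (pb x) (pb y)) (e (tag x y))).
pose Ext := [set w | exists x y, [/\ D x \/ C x, D y \/ C y, ~ (D x /\ D y) &
                                   w = ((x, y), val x y)]].
pose G' := G `|` Ext.
have valC x y : D x \/ C x -> D y \/ C y -> C (val x y).
  move=> Hx Hy; exists (f (f (pb x) (pb y)) (e (tag x y))); split => //.
  by apply: (fD); [apply: (fD); apply: (pbD)|apply: (DN)].
have DomG' x : Dom G' x <-> D x \/ C x.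
  split.
  - move=> [z [Gz|[x1 [y1 [H1 H2 H3 E]]]]].
    + by left; have [] := Ga _ _ _ Gz.
    + by case: E => -> _ _.
  - case=> Hx.
    + by apply: (Dom_mono (G := G)) => //; move=> w ?; left.
    + exists (val x x); right; exists x, x; split => //; [by right|by right|].
      by case=> /CnD.
have PG' : Pg G'.
  split.
  - move=> x y z [Gz|[x1 [y1 [H1 H2 H3 E]]]].
    + by have [? ? ?] := Ga _ _ _ Gz; split; apply/DomG'; left.
    + case: E => -> -> ->; split; apply/DomG' => //; right; exact: valC.
  - move=> x y /DomG' Hx /DomG' Hy.
    case: (pselect (D x /\ D y)) => [[Dx Dy]|ND].
      by have [z Gz] := Gb _ _ Dx Dy; exists z; left.
    by exists (val x y); right; exists x, y.
  - move=> p z z' [G1|[x1 [y1 [H1 H2 H3 E1]]]] [G2|[x2 [y2 [H1' H2' H3' E2]]]].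
    + exact: Gc G1 G2.
    + exfalso; case: E2 => E _; rewrite E in G1.
      by have [? ? _] := Ga _ _ _ G1; apply: H3'.
    + exfalso; case: E1 => E _; rewrite E in G2.
      by have [? ? _] := Ga _ _ _ G2; apply: H3.
    + case: E1 => Ep ->; case: E2 => Ep' ->; rewrite Ep in Ep'.
      by case: Ep' => -> ->.
  - move=> p q z [G1|[x1 [y1 [H1 H2 H3 E1]]]] [G2|[x2 [y2 [H1' H2' H3' E2]]]].
    + exact: Gd G1 G2.
    + exfalso; case: E2 => _ E; rewrite E in G1.
      move: G1; case: p => a b G1.
      have [_ _ Dz] := Ga _ _ _ G1; exact: CnD (valC _ _ H1' H2') Dz.
    + exfalso; case: E1 => _ E; rewrite E in G2.
      move: G2; case: q => a b G2.
      have [_ _ Dz] := Ga _ _ _ G2; exact: CnD (valC _ _ H1 H2) Dz.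
    + case: E1 => -> E1; case: E2 => -> E2; rewrite E1 in E2.
      move: E2; rewrite /val => /ginj.
      have fpD x y : D x \/ C x -> D y \/ C y -> D (f (f (pb x) (pb y)) (e (tag x y))).
        by move=> Hx Hy; apply: (fD); [apply: (fD); apply: (pbD)|apply: (DN)].
      move=> /(_ (fpD _ _ H1 H2) (fpD _ _ H1' H2')).
      move=> /finj [] //; try (apply: (fD); apply: (pbD) => //); try apply: (DN).
      move=> /finj [] //; try (apply: (pbD) => //).
      move=> Ex Ey /einj Et.
      have same a b : D a \/ C a -> D b \/ C b -> (D a <-> D b) -> pb a = pb b -> a = b.
        move=> Ha Hb Eab; rewrite /pb; case: pselect => Da; case: pselect => Db //.
        - by exfalso; apply: Db; apply/Eab.
        - by exfalso; apply: Da; apply/Eab.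
        - case: Ha => // Ca; case: Hb => // Cb /= E.
          by rewrite (Hgi a Ca).2 (Hgi b Cb).2 E.
      move: Et; rewrite /tag.
      case: pselect => Dx1; case: pselect => Dy1; case: pselect => Dx2;
        case: pselect => Dy2 // _;
        try (by exfalso; apply: H3; split); try (by exfalso; apply: H3'; split);
        by congr (_, _); apply: same.
  - move=> x /DomG' [Dx|Cx]; [exact: (Ge)|exact: (CK)].
apply: (Hmax G').
  split; first by move=> w Hw; left; right.
  move=> /(_ ((g (e 0), g (e 0)), val (g (e 0)) (g (e 0)))) S.
  have Cg : C (g (e 0)) by exists (e 0).
  have : H ((g (e 0), g (e 0)), val (g (e 0)) (g (e 0))).
    apply: S; right; exists (g (e 0)), (g (e 0)); split => //; [by right|by right|].
    by case=> /CnD.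
  move=> Hw; have [Dg _ _] := Ga _ _ _ (or_intror Hw : G _); exact: CnD Cg Dg.
have -> : G0 `|` G' = G'.
  by apply/setUidPr => w ?; left; left.
exact: PG'.
Qed.
End Hess.

Lemma myle_card T U (A : set T) (Bs : set U) : myle A Bs -> (A #<= Bs)%card.
Proof.
move=> [f [fB finj]].
have : $| functions.InjFun.type A Bs |.
  apply/injfunPex; exists f; first by move=> x Ax; exact: fB.
  move=> x y; rewrite !inE => Ax Ay; exact: finj.
by case=> h; apply: inj_card_le.
Qed.

Fixpoint allin U (Y : set U) (s : seq U) : Prop :=
  match s with [::] => True | x :: s' => Y x /\ allin Y s' end.

Section Tools.
Variables (T : Type) (K : set T) (e : nat -> T) (pr : T -> T -> T).
Hypotheses (Ke : forall n, K (e n)) (einj : injective e)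
  (prK : forall x y, K x -> K y -> K (pr x y))
  (prinj : forall x y x' y', K x -> K y -> K x' -> K y' -> pr x y = pr x' y' -> x = x' /\ y = y').

Lemma le_union2 U (Y1 Y2 : set U) : myle Y1 K -> myle Y2 K -> myle (Y1 `|` Y2) K.
Proof.
move=> [f1 [f1K f1i]] [f2 [f2K f2i]].
exists (fun y => if pselect (Y1 y) then pr (e 0) (f1 y) else pr (e 1) (f2 y)); split.
  move=> y Yy; case: pselect => H; apply: prK => //; [exact: f1K|].
  by case: Yy => // Hy; apply: f2K.
move=> x y Yx Yy; case: pselect => Hx; case: pselect => Hy.
- by move=> /prinj [] //; [exact: f1K|exact: f1K|move=> _; apply: f1i].
- have Y2y : Y2 y by case: Yy.
  by move=> /prinj [] //; [exact: f1K|exact: f2K|move/einj].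
- have Y2x : Y2 x by case: Yx.
  by move=> /prinj [] //; [exact: f2K|exact: f1K|move/einj].
- have Y2x : Y2 x by case: Yx.
  have Y2y : Y2 y by case: Yy.
  by move=> /prinj [] //; [exact: f2K|exact: f2K|move=> _; apply: f2i].
Qed.

Lemma le_image U V (v0 : V) (D : set V) (F : V -> U) (Y : set U) :
  Y `<=` F @` D -> myle D K -> myle Y K.
Proof.
move=> YD [f [fK fi]].
have [d Hd] := @choice2 U V v0 Y (fun y x => D x /\ F x = y)
  (fun y Yy => ltac:(have [x Dx Fx] := YD y Yy; exact: ex_intro _ x (conj Dx Fx))).
exists (fun y => f (d y)); split.
  by move=> y Yy; apply: fK; exact: (Hd y Yy).1.
move=> x y Yx Yy E.
have := fi _ _ (Hd x Yx).1 (Hd y Yy).1 E.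
by move=> E'; rewrite -(Hd x Yx).2 -(Hd y Yy).2 E'.
Qed.

Lemma le_prod U (Y : set U) : myle Y K -> myle [set p : U * U | Y p.1 /\ Y p.2] K.
Proof.
move=> [f [fK fi]]; exists (fun p => pr (f p.1) (f p.2)); split.
  by move=> p [Y1 Y2]; apply: prK; apply: fK.
move=> [a b] [a' b'] /= [Ya Yb] [Ya' Yb'] E.
have [E1 E2] := prinj (fK _ Ya) (fK _ Yb) (fK _ Ya') (fK _ Yb') E.
by rewrite (fi _ _ Ya Ya' E1) (fi _ _ Yb Yb' E2).
Qed.

Lemma le_seq U (Y : set U) : myle Y K -> myle (allin Y) K.
Proof.
move=> [f [fK fi]].
pose code := foldr (fun x c => pr (e 1) (pr (f x) c)) (pr (e 0) (e 0)).
have codeK s : allin Y s -> K (code s).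
  elim: s => [|x s IH] /=; first by move=> _; apply: prK.
  by move=> [Yx Ys]; apply: prK => //; apply: prK; [apply: fK|apply: IH].
exists code; split => //.
elim=> [|x s IH] [|y t] //=.
- move=> _ [Yy Yt] E.
  have [E1 _] := prinj (Ke 0) (Ke 0) (Ke 1) (prK (fK _ Yy) (codeK _ Yt)) E.
  by move/einj: E1.
- move=> [Yx Ys] _ E.
  have [E1 _] := prinj (Ke 1) (prK (fK _ Yx) (codeK _ Ys)) (Ke 0) (Ke 0) E.
  by move/einj: E1.
- move=> [Yx Ys] [Yy Yt] E.
  have [_ E2] := prinj (Ke 1) (prK (fK _ Yx) (codeK _ Ys)) (Ke 1)
                   (prK (fK _ Yy) (codeK _ Yt)) E.
  have [E3 E4] := prinj (fK _ Yx) (codeK _ Ys) (fK _ Yy) (codeK _ Yt) E2.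
  by rewrite (fi _ _ Yx Yy E3) (IH _ Ys Yt E4).
Qed.

Lemma le_bigcup U (Y : nat -> set U) : (forall n, myle (Y n) K) ->
  myle (\bigcup_n Y n) K.
Proof.
move=> H; have [phi Hphi] := choice H.
have [n Hn] := @choice2 U nat 0 (\bigcup_n Y n) (fun y n => Y n y)
  (fun y Hy => ltac:(case: Hy => m _ Hm; exact: ex_intro _ m Hm)).
exists (fun y => pr (e (n y)) (phi (n y) y)); split.
  by move=> y Yy; apply: prK => //; apply: (Hphi (n y)).1; exact: Hn.
move=> x y Yx Yy /prinj [] //; try (apply: (Hphi _).1; exact: Hn).
move=> /einj E; move: (Hn y Yy); rewrite -E => Hy.
exact: (Hphi (n x)).2 (Hn x Yx) Hy.
Qed.
End Tools.

Fixpoint stage X (B0 : set (set X)) (good : seq (set X) -> Prop)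
   (Vch : seq (set X) -> set X) (n : nat) : set (set X) :=
  match n with
  | 0 => B0
  | n'.+1 => [set W | stage B0 good Vch n' W \/
       (exists U V, [/\ stage B0 good Vch n' U, stage B0 good Vch n' V & W = U `&` V]) \/
       (exists s, [/\ allin (fun W => stage B0 good Vch n' W \/ W = setT) s, good s & W = Vch s])]
  end.

Lemma allin_sub U (Y Y' : set U) s : Y `<=` Y' -> allin Y s -> allin Y' s.
Proof. by move=> S; elim: s => //= x s IH [Yx Ys]; split; [apply: S|apply: IH]. Qed.

Lemma myle_sub T U (A A' : set T) (K : set U) : A `<=` A' -> myle A' K -> myle A K.
Proof. by move=> S [f [fK fi]]; exists f; split => [x /S|x y /S Ax /S Ay]; [apply: fK|apply: fi]. Qed.

Section Stage.
Variables (X : Type) (B0 : set (set X)) (good : seq (set X) -> Prop)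
   (Vch : seq (set X) -> set X).
Local Notation C := (stage B0 good Vch).

Lemma stage_S n : C n `<=` C n.+1.
Proof. by move=> W H; left. Qed.

Lemma stage_mono m n : (m <= n)%N -> C m `<=` C n.
Proof.
move=> /subnK <-; elim: (n - m) => [|k IH] //=.
by move=> W /IH H; left.
Qed.

Lemma allin_stage s : allin (fun W => (\bigcup_n C n) W \/ W = setT) s ->
  exists n, allin (fun W => C n W \/ W = setT) s.
Proof.
elim: s => [|x s IH] /=; first by exists 0.
move=> [Hx /IH [n Hn]]; case: Hx => [[m _ Cm]|->].
- exists (maxn m n); split; first by left; apply: (stage_mono (leq_maxl m n)).
  apply: allin_sub Hn => W [H|->]; [left; exact: (stage_mono (leq_maxr m n)) H|by right].
- by exists n; split; [right|].
Qed.

Lemma bigcup_inter U V : (\bigcup_n C n) U -> (\bigcup_n C n) V -> (\bigcup_n C n) (U `&` V).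
Proof.
move=> [m _ Cm] [n _ Cn]; exists (maxn m n).+1 => //=; right; left.
exists U, V; split => //; [exact: (stage_mono (leq_maxl m n)) Cm|exact: (stage_mono (leq_maxr m n)) Cn].
Qed.

Lemma bigcup_Vch s : allin (fun W => (\bigcup_n C n) W \/ W = setT) s -> good s ->
  (\bigcup_n C n) (Vch s).
Proof.
move=> /allin_stage [n Hn] g; exists n.+1 => //=; right; right; by exists s; split.
Qed.

Lemma stage_sub (B : set (set X)) : B0 `<=` B ->
  (forall U V, B U -> B V -> B (U `&` V)) -> (forall s, good s -> B (Vch s)) ->
  forall n, C n `<=` B.
Proof.
move=> H0 HI HV; elim=> [|n IH] //= W [H|[[U [V [CU CV ->]]]|[s [_ g ->]]]].
- exact: IH.
- by apply: HI; apply: IH.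
- exact: HV.
Qed.
End Stage.

Unset Implicit Arguments. Set Strict Implicit.

Theorem lemma2p7 (X : Type) (tau B B0 : set (set X)) :
  is_topology tau -> choquet tau ->
  is_base tau B -> closed_under_finite_inter B ->
  B0 `<=` B ->
  exists B1 : set (set X),
    [/\ B0 `<=` B1, B1 `<=` B,
        (B1 #<= ((@inl (set X) nat) @` B0 `|` (@inr (set X) nat) @` setT))%card
      & choquet (generated_topology B1)].
Proof.
move=> Htop [sigma [slegal swin]] [BT Bbase] Binter B0B.
have [tauT tauI tauU] := Htop.
pose good (s : seq (set X)) := exists V, [/\ B V, V !=set0 & V `<=` sigma s].
have [Vch HV] := @choice2 (seq (set X)) (set X) setT good
  (fun s V => [/\ B V, V !=set0 & V `<=` sigma s]) (fun s g => g).
pose C := stage B0 good Vch.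
pose B1 := \bigcup_n C n.
have CB n : C n `<=` B.
  apply: stage_sub; [exact: B0B|exact: Binter|].
  by move=> s g; have [] := HV s g.
have B1B : B1 `<=` B by move=> W [n _ /CB].
exists B1; split => //.
- by move=> W HW; exists 0.
-
  pose K := (@inl (set X) nat) @` B0 `|` (@inr (set X) nat) @` setT.
  have Ke n : K (inr n) by right; exists n.
  have einj : injective (@inr (set X) nat) by move=> a b [].
  have [pr [prK prinj]] := hessenberg Ke einj.
  apply: myle_card; apply: (le_bigcup Ke einj prK prinj) => n.
  elim: n => [|n IH].
    exists inl; split; first by move=> W HW; left; exists W.
    by move=> x y _ _ [].
  have le1 : myle [set W | C n W \/ W = setT] K.
    apply: (le_union2 Ke einj prK prinj IH).
    by exists (fun _ => inr 0); split => // x y -> ->.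
  apply: (@myle_sub _ _ _ ((C n `|` [set W | exists U V, [/\ C n U, C n V & W = U `&` V]])
      `|` [set W | exists s, [/\ allin (fun W => C n W \/ W = setT) s, good s & W = Vch s]])).
    by move=> W /= [H|[H|H]]; [left; left|left; right|right].
  apply: (le_union2 Ke einj prK prinj); first apply: (le_union2 Ke einj prK prinj IH).
  + apply: (@le_image _ _ _ _ (setT, setT)
      [set p | C n p.1 /\ C n p.2] (fun p => p.1 `&` p.2)).
      by move=> W [U [V [CU CV ->]]]; exists (U, V).
    exact: le_prod prK prinj _ _ IH.
  + apply: (@le_image _ _ _ _ [::]
      [set s | allin (fun W => C n W \/ W = setT) s /\ good s] Vch).
      by move=> W [s [H1 H2 ->]]; exists s.
    apply: (@myle_sub _ _ _ (allin (fun W => C n W \/ W = setT))); first by move=> s [].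
    exact: (le_seq Ke einj prK prinj le1).
pose tB := generated_topology B1.
have B1tB : B1 `<=` tB by move=> W HW T' _ S; exact: S _ HW.
pose M W := B1 W \/ W = setT.
have Mtau : M `<=` tau by move=> W [/B1B/BT|->].
have local : forall U, tB U -> forall x, U x -> exists W, [/\ M W, W x & W `<=` U].
  move=> U HU.
  apply: (HU [set U | forall x, U x -> exists W, [/\ M W, W x & W `<=` U]]).
  - split.
    + by move=> x _; exists setT; split => //; right.
    + move=> U1 U2 H1 H2 x [x1 x2].
      have [W1 [M1 W1x S1]] := H1 x x1; have [W2 [M2 W2x S2]] := H2 x x2.
      exists (W1 `&` W2); split.
      * case: M1 => [b1|->]; case: M2 => [b2|->]; rewrite ?setTI ?setIT.
        -- by left; apply: bigcup_inter.
        -- by left.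
        -- by left.
        -- by right.
      * by split.
      * by move=> y [/S1 ? /S2 ?]; split.
    + move=> F FT x [A FA Ax]; have [W [MW Wx S]] := FT A FA x Ax.
      by exists W; split => // y /S Ay; exists A.
  - by move=> W BW x Wx; exists W; split => //; left.
have : forall U, exists W, M W /\ (tB U /\ U !=set0 -> W !=set0 /\ W `<=` U).
  move=> U; case: (pselect (tB U /\ U !=set0)) => [[HU [x Ux]]|N].
    by have [W [MW Wx S]] := local U HU x Ux; exists W; split => // _; split => //; exists x.
  by exists setT; split; [right|].
case/choice => pickW HpW.
have allinM h : allin M (map pickW h).
  by elim: h => //= U h IH; split => //; exact: (HpW U).1.
have goodrc h W : tau W -> W !=set0 -> good (rcons h W) /\ sigma (rcons h W) `<=` W.
  move=> tW nW; have [o [x sx] sub] := slegal h W tW nW; split => //.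
  have [F [FB E]] := Bbase _ o.
  move: (sx); rewrite E => -[A FA Ax].
  exists A; split; [exact: FB|by exists x|].
  by rewrite E => y Ay; exists A.
exists (fun h => Vch (map pickW h)); split.
- move=> h U HU NU; have [MW /(_ (conj HU NU)) [NW SW]] := HpW U.
  rewrite map_rcons; have [g sW] := goodrc (map pickW h) (pickW U) (Mtau _ MW) NW.
  have [BV NV SV] := HV _ g; split => //.
  + apply: B1tB; apply: bigcup_Vch => //; rewrite -map_rcons; exact: allinM.
  + by move=> y /SV /sW /SW.
- move=> U HU HU'.
  pose W n := pickW (U n).
  have mapE n : map pickW (mkseq U n) = mkseq W n by rewrite /mkseq -map_comp.
  have HW n : [/\ M (W n), W n !=set0 & W n `<=` U n].
    have [MW /(_ (HU n)) [NW SW]] := HpW (U n); by split.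
  have HWt n : tau (W n) by have [MW _ _] := HW n; exact: Mtau.
  have HWn n : W n !=set0 by have [_ NW _] := HW n.
  have [x Hx] : (\bigcap_n B_answer sigma W n) !=set0.
    apply: swin; first by move=> n; split.
    move=> n y Wy; have [_ _ SW] := HW n.+1.
    have := HU' n y (SW y Wy); rewrite /B_answer mapE.
    have [g _] := goodrc (mkseq W n) (W n) (HWt n) (HWn n).
    rewrite -mkseqS in g; have [_ _ SV] := HV _ g; exact: SV.
  exists x => n _; have := Hx n.+1 I; rewrite /B_answer mkseqS.
  have [_ sW] := goodrc (mkseq W n.+1) (W n.+1) (HWt n.+1) (HWn n.+1).
  move=> /sW; have [_ _ SW] := HW n.+1; move=> /SW; exact: HU'.
Qed.
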